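(* Suppose $h_{ij}=h$ for all $i\in\mathcal{M}$, $j\in\mathcal{N}$ (for a constant $h>0$). Then the set of Nash equilibria of the finite game with players $\mathcal{M}$, action set $\mathcal{N}$ and tolled costs $\bar c_i(\mathbf{a})=\sum_{l\in\mathcal{M}_{a_i}(\mathbf{a})}\frac{\sigma^2}{h_{la_i}}\frac{\beta_l}{[1-S_i(\mathbf{a})]^+}-\sum_{l\in\mathcal{M}_{a_i}(\mathbf{a})\setminus\{i\}}\frac{\sigma^2}{h_{la_i}}\frac{\beta_l}{[1-S_i(\mathbf{a})+\beta_i]^+}$ coincides with the set of Nash equilibria of the game with the same players and actions and costs $c_i(\mathbf{a})=\frac{\sigma^2}{h_{ia_i}}\frac{\beta_i}{[1-S_i(\mathbf{a})]^+}$, where $S_i(\mathbf{a})=\sum_{k\in\mathcal{M}_{a_i}(\mathbf{a})}\beta_k$.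
   Context: Uplink cellular model: mobiles $\mathcal{M}=\{1,\dots,M\}$, BSs $\mathcal{N}=\{1,\dots,N\}$, power gains $h_{ij}>0$, noise power $\sigma^2>0$, target SINRs $\gamma_i>0$, $\beta_i=\gamma_i/(1+\gamma_i)$. Association profile $\mathbf{a}\in\mathcal{N}^M$, $\mathcal{M}_j(\mathbf{a})=\{l: a_l=j\}$, $[x]^+=\max(x,0)$, positive$/0=+\infty$, and $\bar c_i(\mathbf{a})=+\infty$ whenever its first sum is infinite. $(b,\mathbf{a}_{-i})$ replaces $a_i$ by $b$. For a game with costs $d_i$, $\mathbf{a}$ is a Nash equilibrium if $a_i\in\arg\min_{b\in\mathcal{N}}d_i(b,\mathbf{a}_{-i})$ for all $i$. Standing assumption: there exists at least one feasible association, i.e. some $\mathbf{a}$ with $\sum_{l\in\mathcal{M}_j(\mathbf{a})}\beta_l<1$ for all $j$. *)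

(* Defs.v *)
From HB Require Import structures.
From mathcomp Require Import all_boot all_order all_algebra.
From mathcomp Require Import boolp classical_sets reals constructive_ereal ereal.
Set Implicit Arguments. Unset Strict Implicit. Unset Printing Implicit Defensive.
Import Order.TTheory GRing.Theory Num.Theory.
Local Open Scope ring_scope.

Section Uplink.
Context {R : realType} {M N : nat}.

Definition profile := {ffun 'I_M -> 'I_N}.

Definition upd (a : profile) (i : 'I_M) (b : 'I_N) : profile :=
  [ffun l => if l == i then b else a l].

Definition beta (gamma : 'I_M -> R) (i : 'I_M) : R := gamma i / (1 + gamma i).

Definition posp (x : R) : R := Num.max x 0.

(* x / y as an extended real, with the convention positive/0 = +oo
   (only used with positive numerator x and y = [.]^+ >= 0) *)
Definition divE (x y : R) : \bar R := if 0 < y then (x / y)%:E else +oo%E.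

Definition Sload (gamma : 'I_M -> R) (a : profile) (i : 'I_M) : R :=
  \sum_(k | a k == a i) beta gamma k.

Definition cost (sigma2 : R) (h : 'I_M -> 'I_N -> R) (gamma : 'I_M -> R)
    (a : profile) (i : 'I_M) : \bar R :=
  divE (sigma2 / h i (a i) * beta gamma i) (posp (1 - Sload gamma a i)).

Definition tcost (sigma2 : R) (h : 'I_M -> 'I_N -> R) (gamma : 'I_M -> R)
    (a : profile) (i : 'I_M) : \bar R :=
  let first := (\sum_(l | a l == a i)
       divE (sigma2 / h l (a i) * beta gamma l) (posp (1 - Sload gamma a i)))%E in
  let second := (\sum_(l | (a l == a i) && (l != i))
       divE (sigma2 / h l (a i) * beta gamma l)
            (posp (1 - Sload gamma a i + beta gamma i)))%E in
  if first == +oo%E then +oo%E else (first - second)%E.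

Definition is_NE (d : profile -> 'I_M -> \bar R) (a : profile) : Prop :=
  forall (i : 'I_M) (b : 'I_N), (d a i <= d (upd a i b) i)%E.

End Uplink.

(* Main.v *)
Require Import Defs.
From HB Require Import structures.
From mathcomp Require Import all_boot all_order all_algebra.
From mathcomp Require Import boolp classical_sets reals constructive_ereal ereal.
From mathcomp Require Import ring lra.
Import Order.TTheory GRing.Theory Num.Theory.
Local Open Scope ring_scope.

Section Aux.
Variable R : realType.

Lemma crit (phi : R -> \bar R) (c x y : R)
  (Hinf : forall z, c <= z -> phi z = +oo%E)
  (Hfin : forall z, z < c -> (phi z < +oo)%E)
  (Hmono : forall u v, 0 <= u -> u < v -> u < c -> (phi u < phi v)%E) :
  0 <= x -> 0 <= y -> ((phi x <= phi y)%E <-> (c <= y \/ x <= y)).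
Proof.
move=> x0 y0; split.
- move=> H.
  case: (lerP c y) => hy; first by left.
  case: (lerP x y) => hxy; first by right.
  exfalso.
  case: (lerP c x) => hx.
    move: H; rewrite (Hinf x hx) leye_eq => /eqP Hy.
    by move: (Hfin y hy); rewrite Hy ltxx.
  have := Hmono y x y0 hxy hy.
  by move=> /lt_le_trans /(_ H); rewrite ltxx.
- case=> [hy|hxy]; first by rewrite (Hinf y hy) leey.
  case: (lerP c y) => hy; first by rewrite (Hinf y hy) leey.
  move: hxy; rewrite le_eqVlt => /orP [/eqP -> //| hxy].
  by apply: ltW; apply: Hmono => //; exact: lt_trans hxy hy.
Qed.

Definition phic (K b x : R) : \bar R := divE (K * b) (posp (1 - (b + x))).
Definition phit (K b x : R) : \bar R :=
  if 0 < 1 - (b + x) then ((K * (b + x)) / (1 - (b + x)) - (K * x) / (1 - x))%:E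
  else +oo%E.

Lemma posp_pos (v : R) : 0 < v -> posp v = v.
Proof. by move=> h; rewrite /posp max_l // ltW. Qed.
Lemma posp_npos (v : R) : v <= 0 -> posp v = 0.
Proof. by move=> h; rewrite /posp max_r. Qed.

Lemma critc (K b x y : R) : 0 < K -> 0 < b -> 0 <= x -> 0 <= y ->
  ((phic K b x <= phic K b y)%E <-> (1 - b <= y \/ x <= y)).
Proof.
move=> K0 b0 x0 y0; apply: crit => //.
- by move=> z hz; rewrite /phic /divE posp_npos ?ltxx //; lra.
- by move=> z hz; rewrite /phic /divE posp_pos; [rewrite ifT ?ltry |]; lra.
- move=> u v u0 uv uc; rewrite /phic /divE (posp_pos (1 - (b+u))); last lra.
  rewrite ifT; last lra.
  case: (lerP (1 - b) v) => hv.
    by rewrite posp_npos ?ltxx ?ltry //; lra.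
  rewrite posp_pos; last lra.
  rewrite ifT; last lra.
  rewrite lte_fin ltr_pM2l ?mulr_gt0 //.
  rewrite ltf_pV2 ?posrE; lra.
Qed.

Lemma phit_fin (K b z : R) : 0 < b -> z < 1 - b ->
  phit K b z = ((K * b) / ((1 - z) * (1 - (b + z))))%:E.
Proof.
move=> b0 hz; rewrite /phit ifT; last lra.
congr (_%:E); field; apply/andP; split; apply/eqP; lra.
Qed.

Lemma critt (K b x y : R) : 0 < K -> 0 < b -> 0 <= x -> 0 <= y ->
  ((phit K b x <= phit K b y)%E <-> (1 - b <= y \/ x <= y)).
Proof.
move=> K0 b0 x0 y0; apply: crit => //.
- by move=> z hz; rewrite /phit ifF //; apply/negbTE; rewrite -leNgt; lra.
- by move=> z hz; rewrite phit_fin ?ltry.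
- move=> u v u0 uv uc; rewrite phit_fin //.
  case: (lerP (1 - b) v) => hv.
    by rewrite /phit ifF ?ltry //; apply/negbTE; rewrite -leNgt; lra.
  rewrite phit_fin // lte_fin ltr_pM2l ?mulr_gt0 //.
  rewrite ltf_pV2 ?posrE; try apply: mulr_gt0; try lra.
  nra.
Qed.

End Aux.
Arguments phic {R}. Arguments phit {R}. Arguments critc {R}. Arguments critt {R}.

Theorem proposition16 (R : realType) (M N : nat)
    (hg : 'I_M -> 'I_N -> R) (h sigma2 : R) (gamma : 'I_M -> R)
    (hpos : 0 < h) (hconst : forall i j, hg i j = h)
    (sigma2pos : 0 < sigma2) (gammapos : forall i, 0 < gamma i)
    (feasible : exists a : @profile M N,
        forall j : 'I_N, \sum_(l | a l == j) beta gamma l < 1) :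
  forall a : @profile M N,
    is_NE (tcost sigma2 hg gamma) a <-> is_NE (cost sigma2 hg gamma) a.
Proof.
move=> a.
set K := sigma2 / h.
have K0 : 0 < K by rewrite divr_gt0.
have b0 : forall i, 0 < beta gamma i.
  by move=> i; rewrite /beta divr_gt0 // ?addr_gt0.
pose T (a : @profile M N) (i : 'I_M) :=
  \sum_(k | (a k == a i) && (k != i)) beta gamma k.
have T0 : forall (a : @profile M N) (i : 'I_M), 0 <= T a i.
  by move=> a' i; apply: sumr_ge0 => k _; apply: ltW.
have hS : forall (a : @profile M N) (i : 'I_M), \sum_(k | a k == a i) beta gamma k = beta gamma i + T a i.
  by move=> a' i; rewrite (bigD1 i).
have ceq : forall (a : @profile M N) (i : 'I_M), cost sigma2 hg gamma a i = phic K (beta gamma i) (T a i).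
  by move=> a' i; rewrite /cost hconst /Sload hS.
have teq : forall (a : @profile M N) (i : 'I_M), tcost sigma2 hg gamma a i = phit K (beta gamma i) (T a i).
  move=> a' i; rewrite /tcost /Sload hS /phit; cbv zeta.
  case: (ltrP 0 (1 - (beta gamma i + T a' i))) => hp; rewrite ?hp ?(ltNge 0) ?hp /=.
  - rewrite (eq_bigr (fun l => ((K * beta gamma l) / (1 - (beta gamma i + T a' i)))%:E));
      last by move=> l _; rewrite hconst /divE posp_pos // hp.
    rewrite sumEFin -mulr_suml -mulr_sumr hS; rewrite (_ : (_%:E == +oo%E) = false) //.
    rewrite (eq_bigr (fun l => ((K * beta gamma l) / (1 - T a' i))%:E)); last first.
      move=> l _; rewrite hconst /divE.
      have -> : 1 - (beta gamma i + T a' i) + beta gamma i = 1 - T a' i by ring.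
      rewrite posp_pos; last by have := b0 i; lra.
      by rewrite ifT //; have := b0 i; lra.
    by rewrite sumEFin -mulr_suml -mulr_sumr -EFinB.
  - rewrite (eq_bigr (fun l => +oo%E)); last first.
      by move=> l _; rewrite /divE posp_npos ?ltxx.
    rewrite (bigD1 i) //= addye ?eqxx //.
    rewrite gt_eqF // (lt_le_trans _ (sume_ge0 _ _)) ?ltNy0 //.
split=> H i b; have := H i b; rewrite !ceq !teq.
- by move/(critt _ _ _ _ K0 (b0 i) (T0 _ _) (T0 _ _)) => /(critc _ _ _ _ K0 (b0 i) (T0 _ _) (T0 _ _)).
- by move/(critc _ _ _ _ K0 (b0 i) (T0 _ _) (T0 _ _)) => /(critt _ _ _ _ K0 (b0 i) (T0 _ _) (T0 _ _)).
Qed.
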